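(* Let $m>1$ be odd and let $\varphi:\mathbb{Z}_{2m}\to\{\pm1\}$ be a binary sequence of length $2m$. Define the binary $(2,m)$-array $\phi:\mathbb{Z}_2\times\mathbb{Z}_m\to\{\pm1\}$ as follows, where $a\in\{0,1\}$, $k$ is taken as an integer in $\{0,1,\ldots,m-1\}$, and arguments of $\varphi$ are read modulo $2m$. If $m\equiv 1 \pmod 4$: $\phi(a,k)=\varphi(k+am)$ if $k\equiv 0\pmod 4$; $\phi(a,k)=(-1)^{1-a}\varphi(k+(1-a)m)$ if $k\equiv 1\pmod 4$; $\phi(a,k)=-\varphi(k+am)$ if $k\equiv 2\pmod 4$; $\phi(a,k)=(-1)^{a}\varphi(k+(1-a)m)$ if $k\equiv 3\pmod 4$. If $m\equiv 3 \pmod 4$: $\phi(a,k)=(-1)^a\varphi(k+am)$ if $k\equiv 0\pmod 4$; $\phi(a,k)=\varphi(k+(1-a)m)$ if $k\equiv 1\pmod 4$; $\phi(a,k)=(-1)^{1-a}\varphi(k+am)$ if $k\equiv 2\pmod 4$; $\phi(a,k)=-\varphi(k+(1-a)m)$ if $k\equiv 3\pmod 4$. Then $\varphi$ is a GOBS if and only if $\phi$ is a GOBA$(2,m)$ of type $(1,0)$.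
   Context: For a finite abelian group $A$ (written additively) and a map $\psi:A\to\mathbb{C}$, the periodic autocorrelation is $R_\psi(x)=\sum_{b\in A}\psi(b)\overline{\psi(x+b)}$ for $x\in A$. Let $m$ be odd. A binary $(2,m)$-array is a map $\phi:\mathbb{Z}_2\times\mathbb{Z}_m\to\{\pm1\}$. Its expansion (with respect to type $(1,0)$) is $\phi':\mathbb{Z}_4\times\mathbb{Z}_m\to\{\pm1\}$ given by $\phi'(a,k)=\phi(a \bmod 2,k)$ for $a\in\{0,1\}$ and $\phi'(a,k)=-\phi(a\bmod 2,k)$ for $a\in\{2,3\}$. The array $\phi$ is a GOBA$(2,m)$ of type $(1,0)$ if $R_{\phi'}(x)\in\{0,4,-4\}$ for all $x\in(\mathbb{Z}_4\times\mathbb{Z}_m)\setminus\{(0,0),(2,0)\}$ and exactly $2m$ elements $x\in\mathbb{Z}_4\times\mathbb{Z}_m$ satisfy $R_{\phi'}(x)=0$. For a binary sequence $\varphi:\mathbb{Z}_{2m}\to\{\pm1\}$, its expansion is $\varphi':\mathbb{Z}_{4m}\to\{\pm1\}$ with $\varphi'(x)=\varphi(x\bmod 2m)$ for $x\in\{0,\ldots,2m-1\}$ and $\varphi'(x)=-\varphi(x\bmod 2m)$ for $x\in\{2m,\ldots,4m-1\}$. The sequence $\varphi$ is a GOBS (generalized optimal binary sequence) if $R_{\varphi'}(x)\in\{0,4,-4\}$ for all $x\in\mathbb{Z}_{4m}\setminus\{0,2m\}$ and exactly $2m$ elements $x\in\mathbb{Z}_{4m}$ satisfy $R_{\varphi'}(x)=0$.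 *)

(* Defs.v *)
(* Values of binary sequences/arrays are taken in int (+1/-1);
   complex conjugation is the identity on such real values. *)
From mathcomp Require Import all_boot all_order all_algebra.
Set Implicit Arguments. Unset Strict Implicit. Unset Printing Implicit Defensive.
Import Order.TTheory GRing.Theory Num.Theory.
Local Open Scope ring_scope.

Definition pm1 (z : int) : bool := (z == 1) || (z == -1).

(* ---------- sequences: varphi : Z_{2m} -> {+-1}, represented by nat -> int,
   only the values at 0..2m-1 matter (arguments are always reduced mod 2m). *)
Definition binary_seq (m : nat) (phi : nat -> int) : Prop :=
  forall x : nat, (x < 2 * m)%N -> pm1 (phi x).

Definition seq_expand (m : nat) (phi : nat -> int) (x : nat) : int :=
  let y := (x %% (4 * m))%N in
  if (y < 2 * m)%N then phi y else - phi (y - 2 * m)%N.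

Definition seq_autocorr (m : nat) (psi : nat -> int) (x : nat) : int :=
  \sum_(b < 4 * m) psi b * psi ((x + b) %% (4 * m))%N.

Definition in_0_pm4 (z : int) : bool := [|| z == 0, z == 4 | z == -4].

Definition is_GOBS (m : nat) (phi : nat -> int) : Prop :=
  binary_seq m phi /\
  let R := seq_autocorr m (seq_expand m phi) in
  (forall x : 'I_(4 * m), (x != 0 :> nat) -> (x != 2 * m :> nat) -> in_0_pm4 (R x))
  /\ #|[set x : 'I_(4 * m) | R x == 0]| = (2 * m)%N.

(* ---------- arrays: phi : Z_2 x Z_m -> {+-1}, represented by nat -> nat -> int,
   only the values at a < 2, k < m matter. *)
Definition binary_arr (m : nat) (phi : nat -> nat -> int) : Prop :=
  forall a k : nat, (a < 2)%N -> (k < m)%N -> pm1 (phi a k).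

Definition arr_expand (m : nat) (phi : nat -> nat -> int) (a k : nat) : int :=
  let a' := (a %% 4)%N in let k' := (k %% m)%N in
  if (a' < 2)%N then phi a' k' else - phi (a' - 2)%N k'.

Definition arr_autocorr (m : nat) (psi : nat -> nat -> int) (x1 x2 : nat) : int :=
  \sum_(b1 < 4) \sum_(b2 < m) psi b1 b2 * psi ((x1 + b1) %% 4)%N ((x2 + b2) %% m)%N.

Definition is_GOBA_10 (m : nat) (phi : nat -> nat -> int) : Prop :=
  binary_arr m phi /\
  let R := arr_autocorr m (arr_expand m phi) in
  (forall (x1 : 'I_4) (x2 : 'I_m),
      ~ ((x1 == 0 :> nat) && (x2 == 0 :> nat)) ->
      ~ ((x1 == 2 :> nat) && (x2 == 0 :> nat)) ->
      in_0_pm4 (R x1 x2))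
  /\ #|[set x : 'I_4 * 'I_m | R x.1 x.2 == 0]| = (2 * m)%N.

Definition arr_of_seq (m : nat) (phi : nat -> int) (a k : nat) : int :=
  let f (i : nat) := phi (i %% (2 * m))%N in
  let s (e : nat) : int := (-1) ^+ e in
  if (m %% 4 == 1)%N then
    match (k %% 4)%N with
    | 0 => f (k + a * m)%N
    | 1 => s (1 - a)%N * f (k + (1 - a) * m)%N
    | 2 => - f (k + a * m)%N
    | _ => s a * f (k + (1 - a) * m)%N
    end
  else
    match (k %% 4)%N with
    | 0 => s a * f (k + a * m)%N
    | 1 => f (k + (1 - a) * m)%N
    | 2 => s (1 - a)%N * f (k + a * m)%N
    | _ => - f (k + (1 - a) * m)%N
    end.

(* Main.v *)
Require Import Defs.
From mathcomp Require Import all_boot all_order all_algebra zify.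
Import Order.TTheory GRing.Theory Num.Theory.
Local Open Scope ring_scope.

Lemma key (m : nat) (phi : nat -> int) (k j : nat) : odd m -> (k < m)%N -> (j < 4)%N ->
  arr_expand m (arr_of_seq m phi) (k + j * m) (k + j * m) = seq_expand m phi (k + j * m).
Proof.
move=> om km j4.
have m4: (m %% 4 = 1 \/ m %% 4 = 3)%N by have := modn2 m; rewrite om; lia.
have k4: (k %% 4 = 0 \/ k %% 4 = 1 \/ k %% 4 = 2 \/ k %% 4 = 3)%N by lia.
have km' : ((k + j * m) %% m = k)%N by rewrite addnC modnMDl modn_small.
rewrite /arr_expand /seq_expand km' {km'} (@modn_small _ (4 * m)); last first.
  by case: j j4 => [|[|[|[|]]]] //= _; lia.
have k2 : ((k + m) %% (2 * m) = k + m)%N by rewrite modn_small //; lia.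
have k1 : (k %% (2 * m) = k)%N by rewrite modn_small //; lia.
case: j j4 => [|[|[|[|]]]] //= _; rewrite ?mul0n ?mul1n ?addn0;
case: m4 => Hm; case: k4 => [Hk|[Hk|[Hk|Hk]]];
  (have -> : ((k + 2 * m) %% 4 = (k %% 4 + 2 * (m %% 4)) %% 4)%N by lia) ||
  (have -> : ((k + 3 * m) %% 4 = (k %% 4 + 3 * (m %% 4)) %% 4)%N by lia) ||
  (have -> : ((k + m) %% 4 = (k %% 4 + (m %% 4)) %% 4)%N by lia) || idtac;
  rewrite ?Hk ?Hm /= /arr_of_seq ?Hk ?Hm /= ?mul0n ?mul1n ?addn0 ?k1 ?k2 ?subn0 ?subnn
     ?expr0 ?expr1 ?mulN1r ?mul1r ?opprK.
all: try (rewrite ifT; last lia).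
all: try (rewrite ifF; last lia).
all: try done.
all: congr (- phi _); lia.
Qed.

Lemma crt_eq (m b c : nat) : odd m -> (b < 4 * m)%N -> (c < 4 * m)%N ->
  (b %% 4 = c %% 4)%N -> (b %% m = c %% m)%N -> b = c.
Proof.
move=> om hb hc e1 e2.
have cp : coprime 4 m by rewrite (_ : 4 = 2 ^ 2)%N // coprime_pexpl // coprime2n.
have := chinese_remainder cp b c; rewrite e1 e2 !eqxx /=.
by move/eqP; rewrite !modn_small.
Qed.

Lemma psi_mod (m : nat) (A : nat -> nat -> int) a k :
  arr_expand m A a k = arr_expand m A (a %% 4) (k %% m).
Proof. by rewrite /arr_expand !modn_mod. Qed.

Lemma se_mod (m : nat) (phi : nat -> int) x :
  seq_expand m phi x = seq_expand m phi (x %% (4 * m)).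
Proof. by rewrite /seq_expand modn_mod. Qed.

Lemma E (m : nat) (phi : nat -> int) x : odd m ->
  arr_expand m (arr_of_seq m phi) x x = seq_expand m phi x.
Proof.
move=> om; have mpos : (0 < m)%N by case: m om.
set y := (x %% (4 * m))%N.
have y4 : (y < 4 * m)%N by rewrite ltn_pmod // muln_gt0.
rewrite se_mod -/y psi_mod.
have -> : (x %% 4 = y %% 4)%N by rewrite /y modn_dvdm // dvdn_mulr.
have -> : (x %% m = y %% m)%N by rewrite /y modn_dvdm // dvdn_mull.
rewrite -psi_mod (divn_eq y m) addnC key //; first by rewrite ltn_pmod.
by rewrite ltn_divLR.
Qed.

Lemma pm1N z : pm1 z -> pm1 (- z).
Proof. by rewrite /pm1 => /orP[] /eqP ->; rewrite ?opprK eqxx ?orbT. Qed.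

Lemma pm1S (e : nat) z : pm1 z -> pm1 ((-1) ^+ e * z).
Proof. by move=> h; rewrite -signr_odd; case: (odd e); rewrite ?expr0 ?mul1r ?expr1 ?mulN1r // pm1N. Qed.

Theorem lemma1 (m : nat) (phi : nat -> int) :
  odd m -> (1 < m)%N -> binary_seq m phi ->
  (is_GOBS m phi <-> is_GOBA_10 m (arr_of_seq m phi)).
Proof.
move=> om m1 bs.
have mpos : (0 < m)%N := ltnW m1.
set A := arr_of_seq m phi.
have bA : binary_arr m A.
  move=> a k _ _.
  have hf : forall i, pm1 (phi (i %% (2 * m))%N).
    by move=> i; apply: bs; rewrite ltn_pmod // muln_gt0.
  rewrite /A /arr_of_seq; case: ifP => _; case: (k %% 4)%N => [|[|[|n]]];
    by rewrite ?pm1N ?pm1S ?hf.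
pose h (b : 'I_(4 * m)) : 'I_4 * 'I_m :=
  (Ordinal (ltn_pmod b (isT : (0 < 4)%N)), Ordinal (ltn_pmod b mpos)).
have hinj : injective h.
  move=> b c /(congr1 (fun p => (val p.1, val p.2))) [] e1 e2; apply: val_inj; apply: crt_eq e1 e2 => //.
have hbij : bijective h.
  by apply: inj_card_bij => //; rewrite card_prod !card_ord.
set Ra := arr_autocorr m (arr_expand m A).
set Rs := seq_autocorr m (seq_expand m phi).
have rel : forall b : 'I_(4 * m), Ra (h b).1 (h b).2 = Rs b.
  move=> x; rewrite /Ra /Rs /arr_autocorr /seq_autocorr /=.
  rewrite pair_bigA (reindex h (onW_bij _ hbij)) /=.
  apply: eq_bigr => b _ /=.
  rewrite psi_mod modn_mod [in X in X * _]psi_mod (psi_mod _ _ ((x %% 4 + b %% 4) %% 4)%N) !modn_mod !modnDm.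
  rewrite -(psi_mod _ _ (x + b)%N) -psi_mod !E //.
  by rewrite -se_mod.
have card_eq : #|[set x : 'I_4 * 'I_m | Ra x.1 x.2 == 0]| =
               #|[set x : 'I_(4 * m) | Rs x == 0]|.
  rewrite -!sum1_card (reindex h (onW_bij _ hbij)) /=.
  by apply: eq_bigl => b; rewrite !inE rel.
have h0 : forall b : 'I_(4 * m), ((b %% 4 == 0) && (b %% m == 0))%N -> (b = 0 :> nat)%N.
  move=> b /andP[/eqP e1 /eqP e2]; apply: (@crt_eq m b 0 om); by rewrite ?mod0n ?muln_gt0 ?e1 ?e2.
have h2 : forall b : 'I_(4 * m), ((b %% 4 == 2) && (b %% m == 0))%N -> (b = 2 * m :> nat)%N.
  move=> b /andP[/eqP e1 /eqP e2]; apply: (@crt_eq m b (2 * m) om) => //.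
  - by rewrite ltn_pmul2r.
  - rewrite e1; have := modn2 m; rewrite om; lia.
  - by rewrite e2 modnMl.
split.
- move=> [_ [H1 H2]]; split => //; split; last by rewrite card_eq.
  move=> x1 x2 n0 n2.
  have [hi hK Kh] := hbij.
  change (in_0_pm4 (Ra x1 x2)); have := rel (hi (x1, x2)); rewrite Kh /= => ->.
  have ex1 : (nat_of_ord x1 = hi (x1, x2) %% 4)%N by have := congr1 (fun p => nat_of_ord p.1) (Kh (x1, x2)) => /= <-.
  have ex2 : (nat_of_ord x2 = hi (x1, x2) %% m)%N by have := congr1 (fun p => nat_of_ord p.2) (Kh (x1, x2)) => /= <-.
  apply: H1.
  + apply/eqP => e; apply: n0.
    rewrite ex1 ex2 (e : _ = 0%N) !mod0n. by apply/andP; split; apply/eqP.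
  + apply/eqP => e; apply: n2.
    rewrite ex1 ex2 e; apply/andP; split; apply/eqP; [have := modn2 m; rewrite om; lia | exact: modnMl].
- move=> [_ [H1 H2]]; split => //; split; last by rewrite -card_eq.
  move=> x n0 n2; change (in_0_pm4 (Rs x)); rewrite -rel; apply: H1.
  + by move=> c; move/eqP: n0; apply; apply: h0.
  + by move=> c; move/eqP: n2; apply; apply: h2.
Qed.
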